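(* Let $\Gamma$ be the first Grigorchuk group with generators $a,b,c,d$, acting on the right on $\{0,1\}^{\mathbb N}$, and let $\rho=111\cdots$. For a word $w=w_1\cdots w_n$ over $\{a,b,c,d\}$ let $\mathcal O(w)=\{\rho\,w_{i+1}\cdots w_n: i=0,\dots,n\}$, and set $\Sigma(n)=\#\{\mathcal O(w): w\text{ a word over }\{a,b,c,d\},\ |w|\le n\}$. Let $\eta$ be the real root of $t^3+t^2+t-2$ and $\alpha=\log 2/\log(2/\eta)$. Then $\Sigma(n)\preceq\exp(n^\alpha)$.
   Context: The first Grigorchuk group $\Gamma$ is the group of permutations of $\{0,1\}^{\mathbb N}$ (acting on the right) generated by $a,b,c,d$, defined recursively for $x\in\{0,1\}$ and infinite binary sequences $u$ by: $(xu)a=(1-x)u$; $(0u)b=0(ua)$, $(1u)b=1(uc)$; $(0u)c=0(ua)$, $(1u)c=1(ud)$; $(0u)d=0u$, $(1u)d=1(ub)$. For functions $f,g:\mathbb N\to\mathbb R_+$, $g\preceq f$ means there is $C>0$ with $g(n)\le f(Cn)$ for all sufficiently large $n$. *)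

(* Defs.v *)
From Stdlib Require Import Reals List ClassicalEpsilon.
Import ListNotations.

Inductive letter := La | Lb | Lc | Ld.

Inductive gstate := Sa | Sb | Sc | Sd | Se.

Definition of_letter (l : letter) : gstate :=
  match l with La => Sa | Lb => Sb | Lc => Sc | Ld => Sd end.

(* Binary digit 0 = false, 1 = true.  step s x = (output digit, next state):
   (xu)a=(1-x)u ; (0u)b=0(ua), (1u)b=1(uc) ; (0u)c=0(ua), (1u)c=1(ud) ;
   (0u)d=0u, (1u)d=1(ub). *)
Definition step (s : gstate) (x : bool) : bool * gstate :=
  match s with
  | Sa => (negb x, Se)
  | Sb => if x then (true, Sc) else (false, Sa)
  | Sc => if x then (true, Sd) else (false, Sa)
  | Sd => if x then (true, Sb) else (false, Se)
  | Se => (x, Se)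
  end.

Definition bseq := nat -> bool.

Fixpoint state_at (s : gstate) (u : bseq) (k : nat) : gstate :=
  match k with
  | O => s
  | S k' => snd (step (state_at s u k') (u k'))
  end.

Definition act_gen (l : letter) (u : bseq) : bseq :=
  fun k => fst (step (state_at (of_letter l) u k) (u k)).

Definition act_word (u : bseq) (w : list letter) : bseq :=
  fold_left (fun v l => act_gen l v) w u.

Definition rho : bseq := fun _ => true.

Definition orbit_mem (w : list letter) (x : bseq) : Prop :=
  exists i, i <= length w /\ forall k, x k = act_word rho (skipn i w) k.

Definition orbit_eq (w w' : list letter) : Prop :=
  forall x, orbit_mem w x <-> orbit_mem w' x.

Fixpoint words_exact (n : nat) : list (list letter) :=
  match n with
  | O => [nil]
  | S n' => flat_map (fun w => map (fun l => l :: w) [La; Lb; Lc; Ld]) (words_exact n')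
  end.

Definition words_upto (n : nat) : list (list letter) :=
  flat_map words_exact (seq 0 (S n)).

Definition orbit_eqb (w w' : list letter) : bool :=
  if excluded_middle_informative (orbit_eq w w') then true else false.

Fixpoint dedup_orbits (l : list (list letter)) : list (list letter) :=
  match l with
  | nil => nil
  | w :: l' => if existsb (orbit_eqb w) l' then dedup_orbits l' else w :: dedup_orbits l'
  end.

Definition Sigma (n : nat) : nat := length (dedup_orbits (words_upto n)).

(* Main.v *)
Require Import Defs.
From Stdlib Require Import Reals.
Open Scope R_scope.
From Stdlib Require Import List Lia Lra Bool FunctionalExtensionality ClassicalEpsilon Classical ZArith.
Import ListNotations.
Close Scope R_scope.

Definition act (s : gstate) (u : bseq) : bseq :=
  fun k => fst (step (state_at s u k) (u k)).

Definition bcons (x : bool) (u : bseq) : bseq :=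
  fun k => match k with O => x | S k => u k end.

Lemma state_at_cons s x u k :
  state_at s (bcons x u) (S k) = state_at (snd (step s x)) u k.
Proof.
  induction k as [|k IH]; [reflexivity|].
  change (state_at s (bcons x u) (S (S k))) with
    (snd (step (state_at s (bcons x u) (S k)) (bcons x u (S k)))).
  rewrite IH. reflexivity.
Qed.

Lemma act_cons s x u :
  act s (bcons x u) = bcons (fst (step s x)) (act (snd (step s x)) u).
Proof.
  apply functional_extensionality; intros [|k]; [reflexivity|].
  unfold act. rewrite state_at_cons. reflexivity.
Qed.

Lemma state_at_Se u k : state_at Se u k = Se.
Proof. induction k; simpl; [reflexivity| rewrite IHk; reflexivity]. Qed.

Lemma act_Se u : act Se u = u.
Proof.
  apply functional_extensionality; intro k. unfold act. rewrite state_at_Se. reflexivity.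
Qed.

Lemma rho_cons : rho = bcons true rho.
Proof. apply functional_extensionality; intros [|k]; reflexivity. Qed.

Definition goodb (s : gstate) : bool :=
  match s with Sb | Sc | Sd => true | _ => false end.

Lemma act_rho s : goodb s = true -> act s rho = rho.
Proof.
  intro H. assert (Hk : forall k, goodb (state_at s rho k) = true).
  { induction k; simpl; [exact H|].
    destruct (state_at s rho k); simpl in *; try discriminate; reflexivity. }
  apply functional_extensionality; intro k. unfold act.
  specialize (Hk k). destruct (state_at s rho k); try discriminate; reflexivity.
Qed.

Definition gmul (x y : gstate) : option gstate :=
  match x, y with
  | Se, z => Some z
  | z, Se => Some z
  | Sa, Sa => Some Se
  | Sb, Sb => Some Se | Sc, Sc => Some Se | Sd, Sd => Some Se
  | Sb, Sc => Some Sd | Sc, Sb => Some Sd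
  | Sb, Sd => Some Sc | Sd, Sb => Some Sc
  | Sc, Sd => Some Sb | Sd, Sc => Some Sb
  | _, _ => None
  end.

Lemma rel_step x y z b :
  gmul x y = Some z ->
  fst (step y (fst (step x b))) = fst (step z b) /\
  gmul (snd (step x b)) (snd (step y (fst (step x b)))) = Some (snd (step z b)).
Proof.
  destruct x, y, z, b; simpl; intro H; try discriminate; split; reflexivity.
Qed.

Lemma act_comp x y z u : gmul x y = Some z -> act y (act x u) = act z u.
Proof.
  intro H.
  assert (Hk : forall k, gmul (state_at x u k) (state_at y (act x u) k) = Some (state_at z u k)).
  { induction k; [exact H|]. simpl.
    unfold act at 2. destruct (rel_step _ _ _ (u k) IHk) as [_ H2]. exact H2. }
  apply functional_extensionality; intro k. unfold act at 1 3.
  unfold act at 1. destruct (rel_step _ _ _ (u k) (Hk k)) as [H1 _]. exact H1.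
Qed.

Lemma act_word_cons u l w : act_word u (l :: w) = act_word (act (of_letter l) u) w.
Proof. reflexivity. Qed.

Lemma act_word_app u w1 w2 : act_word u (w1 ++ w2) = act_word (act_word u w1) w2.
Proof. unfold act_word. apply fold_left_app. Qed.

Inductive v4 := E | B | C | D.

Definition vmul (x y : v4) : v4 :=
  match x, y with
  | E, z => z | z, E => z
  | B, B => E | C, C => E | D, D => E
  | B, C => D | C, B => D | B, D => C | D, B => C | C, D => B | D, C => B
  end.

Definition vs (y : v4) : gstate := match y with E => Se | B => Sb | C => Sc | D => Sd end.
Definition lett (y : v4) : list letter :=
  match y with E => [] | B => [Lb] | C => [Lc] | D => [Ld] end.
Definition v_of (l : letter) : v4 := match l with La => E | Lb => B | Lc => C | Ld => D end.
Definition rot (y : v4) : v4 := match y with E => E | B => C | C => D | D => B end.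
Definition sec (e : bool) (y : v4) : list letter :=
  if e then lett (rot y) else match y with B | C => [La] | _ => [] end.
Fixpoint Tail (e : bool) (ys : list v4) : list letter :=
  match ys with [] => [] | y :: ys => sec (negb e) y ++ Tail (negb e) ys end.
Definition to_word (ys : list v4) : list letter := flat_map (fun y => La :: lett y) ys.

Fixpoint cst (w : list letter) : v4 * list v4 :=
  match w with
  | [] => (E, [])
  | La :: w => (E, fst (cst w) :: snd (cst w))
  | l :: w => (vmul (v_of l) (fst (cst w)), snd (cst w))
  end.
Definition canon w := snd (cst w).

Lemma act_lett u y : act_word u (lett y) = act (vs y) u.
Proof. destruct y; simpl; try reflexivity. symmetry; apply act_Se. Qed.

Lemma G w : forall u, act_word u w = act_word u (lett (fst (cst w)) ++ to_word (snd (cst w))).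
Proof.
  induction w as [|l w IH]; intro u; [reflexivity|].
  rewrite act_word_cons, IH. destruct l.
  - reflexivity.
  - change (cst (Lb :: w)) with (vmul B (fst (cst w)), snd (cst w)).
    cbn [fst snd]. rewrite !act_word_app, !act_lett.
    f_equal. apply act_comp. destruct (fst (cst w)); reflexivity.
  - change (cst (Lc :: w)) with (vmul C (fst (cst w)), snd (cst w)).
    cbn [fst snd]. rewrite !act_word_app, !act_lett.
    f_equal. apply act_comp. destruct (fst (cst w)); reflexivity.
  - change (cst (Ld :: w)) with (vmul D (fst (cst w)), snd (cst w)).
    cbn [fst snd]. rewrite !act_word_app, !act_lett.
    f_equal. apply act_comp. destruct (fst (cst w)); reflexivity.
Qed.

Lemma act_lett_cons e u y :
  act_word (bcons e u) (lett y) = bcons e (act_word u (sec e y)).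
Proof.
  rewrite act_lett. destruct y; simpl.
  - rewrite !act_Se. destruct e; reflexivity.
  - rewrite act_cons. destruct e; reflexivity.
  - rewrite act_cons. destruct e; reflexivity.
  - rewrite act_cons. destruct e; simpl; [reflexivity|]. rewrite act_Se. reflexivity.
Qed.

Lemma L1 ys : forall e u,
  act_word (bcons e u) (to_word ys) = bcons (xorb e (Nat.odd (length ys))) (act_word u (Tail e ys)).
Proof.
  induction ys as [|y ys IH]; intros e u.
  - simpl. rewrite xorb_false_r. reflexivity.
  - change (to_word (y :: ys)) with (La :: lett y ++ to_word ys).
    rewrite act_word_cons, act_cons, act_word_app. simpl (fst (step Sa e)). simpl (snd (step Sa e)).
    rewrite act_Se, act_lett_cons, IH. simpl Tail. rewrite act_word_app.
    f_equal. simpl length. rewrite Nat.odd_succ, <- Nat.negb_odd.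
    destruct e, (Nat.odd (length ys)); reflexivity.
Qed.

Definition Pts (w : list letter) (x : bseq) : Prop :=
  exists i, i <= length w /\ x = act_word rho (skipn i w).

Lemma Pts_nil x : Pts [] x <-> x = rho.
Proof.
  split. - intros [i [_ H]]. destruct i; exact H.
  - intro H. exists 0. split; [lia| exact H].
Qed.

Lemma Pts_cons l w x : Pts (l :: w) x <-> x = act_word rho (l :: w) \/ Pts w x.
Proof.
  split.
  - intros [[|i] [Hi H]]; [left; exact H|]. right. exists i. simpl in *. split; [lia|exact H].
  - intros [H|[i [Hi H]]]; [exists 0; split; [simpl; lia|exact H]|].
    exists (S i). simpl. split; [lia|exact H].
Qed.

Lemma Pts_self w : Pts w (act_word rho w).
Proof. exists 0. split; [lia|reflexivity]. Qed.

Lemma Pts_bcd y X x : Pts (lett y ++ X) x <-> Pts X x.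
Proof.
  destruct y; simpl; try tauto;
  rewrite Pts_cons; rewrite act_word_cons, act_rho by reflexivity;
  split; (intros [H|H]; [subst; apply Pts_self|exact H]) || (intro; right; assumption).
Qed.

Lemma Pts_one y X x : Pts (sec false y ++ X) x <-> x = act_word rho (sec false y ++ X) \/ Pts X x.
Proof.
  destruct y; simpl; try (apply Pts_cons);
  split; try tauto; intros [H|H]; (subst; apply Pts_self) || exact H.
Qed.

Lemma rho_La : act (of_letter La) rho = bcons false rho.
Proof. rewrite rho_cons at 1. rewrite act_cons. simpl. rewrite act_Se. reflexivity. Qed.

Lemma canon_Pts w : forall x, Pts w x <-> Pts (to_word (canon w)) x.
Proof.
  unfold canon. induction w as [|l w IH]; intro x; [simpl; tauto|].
  destruct l.
  - simpl. change (to_word (fst (cst w) :: snd (cst w))) with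
      (La :: lett (fst (cst w)) ++ to_word (snd (cst w))).
    rewrite !Pts_cons, Pts_bcd, <- IH, !act_word_cons, <- G. tauto.
  - simpl. rewrite Pts_cons, act_word_cons, act_rho by reflexivity.
    rewrite <- IH. split; [intros [H|H]; (subst; apply Pts_self) || exact H|tauto].
  - simpl. rewrite Pts_cons, act_word_cons, act_rho by reflexivity.
    rewrite <- IH. split; [intros [H|H]; (subst; apply Pts_self) || exact H|tauto].
  - simpl. rewrite Pts_cons, act_word_cons, act_rho by reflexivity.
    rewrite <- IH. split; [intros [H|H]; (subst; apply Pts_self) || exact H|tauto].
Qed.

Definition PL ys := Pts (to_word ys).

Definition Sset (zs : list v4) (p : bseq) : Prop :=
  exists i, i < length zs /\ Nat.even i = true /\ p = act_word rho (Tail true (skipn i zs)).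

Lemma skipn_S_tl {A} n (l : list A) : skipn (S n) l = skipn n (tl l).
Proof. destruct l; simpl; [destruct n|]; reflexivity. Qed.

Lemma S_cons y ys p : Sset (y :: ys) p <-> p = act_word rho (Tail true (y :: ys)) \/ Sset (tl ys) p.
Proof.
  split.
  - intros [[|[|i]] [Hi [He H]]]; [left; exact H|discriminate|].
    right. exists i. simpl in He. rewrite skipn_S_tl in H. simpl in H.
    destruct ys; simpl in *; [lia|]. split; [lia|split; assumption].
  - intros [H|[i [Hi [He H]]]]; [exists 0; simpl; split; [lia|split; [reflexivity|exact H]]|].
    exists (S (S i)). destruct ys; simpl in *; [lia|]. split; [lia|split; [exact He|exact H]].
Qed.

Lemma S_nil p : ~ Sset [] p.
Proof. intros [i [Hi _]]. simpl in Hi. lia. Qed.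

Lemma Tpts zs : (forall p, Pts (Tail true zs) p <-> p = rho \/ Sset zs p) /\
                (forall p, Pts (Tail false zs) p <-> p = rho \/ Sset (tl zs) p).
Proof.
  induction zs as [|y zs [IH1 IH2]].
  - split; intro p; simpl; rewrite Pts_nil; pose proof (S_nil p); tauto.
  - split; intro p.
    + change (Tail true (y :: zs)) with (sec false y ++ Tail false zs).
      rewrite Pts_one, IH2, S_cons. tauto.
    + change (Tail false (y :: zs)) with (lett (rot y) ++ Tail true zs).
      rewrite Pts_bcd, IH1. simpl. tauto.
Qed.

Lemma PL_cons y ys x : PL (y :: ys) x <-> x = bcons (Nat.odd (length ys)) (act_word rho (Tail true (y :: ys))) \/ PL ys x.
Proof.
  unfold PL. change (to_word (y :: ys)) with (La :: lett y ++ to_word ys).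
  rewrite Pts_cons, Pts_bcd.
  replace (act_word rho (La :: lett y ++ to_word ys)) with (act_word rho (to_word (y :: ys))) by reflexivity.
  rewrite rho_cons at 1. rewrite L1. simpl length. rewrite Nat.odd_succ, <- Nat.negb_odd.
  destruct (Nat.odd (length ys)); simpl; tauto.
Qed.

Lemma PL_dec ys x : PL ys x <-> x = rho \/
   (exists p, Sset ys p /\ x = bcons (negb (Nat.odd (length ys))) p) \/
   (exists p, Sset (tl ys) p /\ x = bcons (Nat.odd (length ys)) p).
Proof.
  induction ys as [|y ys IH].
  - unfold PL. simpl. rewrite Pts_nil. split; [tauto|].
    intros [H|[[p [H _]]|[p [H _]]]]; [exact H| destruct (S_nil _ H)|destruct (S_nil _ H)].
  - rewrite PL_cons, IH. simpl length. rewrite Nat.odd_succ, <- Nat.negb_odd, negb_involutive.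
    simpl tl. split.
    + intros [H|[H|[[p [Hp H]]|[p [Hp H]]]]].
      * right; left. exists (act_word rho (Tail true (y :: ys))). split; [apply S_cons; left; reflexivity|exact H].
      * left; exact H.
      * right; right. exists p. split; assumption.
      * right; left. exists p. split; [apply S_cons; right; exact Hp|exact H].
    + intros [H|[[p [Hp H]]|[p [Hp H]]]].
      * right; left; exact H.
      * apply S_cons in Hp. destruct Hp as [Hp|Hp]; [left; subst; reflexivity|].
        right; right; right. exists p. split; assumption.
      * right; right; left. exists p. split; assumption.
Qed.

Lemma S_char zs p : Sset zs p <-> Pts (Tail true zs) p /\ (p <> rho \/ Sset zs rho).
Proof.
  destruct (Tpts zs) as [H _]. rewrite H.
  split.
  - intro Hp. split; [right; exact Hp|]. destruct (classic (p = rho)) as [He|He]; [right; rewrite <- He; exact Hp|left; exact He].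
  - intros [[He|Hp] [N|Hr]]; [contradiction|rewrite He; exact Hr|exact Hp|exact Hp].
Qed.

Definition bdec (P : Prop) : bool := if excluded_middle_informative P then true else false.

Lemma bdec_eq P Q : bdec P = bdec Q -> (P <-> Q).
Proof.
  unfold bdec. destruct (excluded_middle_informative P), (excluded_middle_informative Q); intro H; try discriminate; tauto.
Qed.

Lemma determine ys ys' :
  Nat.odd (length ys) = Nat.odd (length ys') ->
  bdec (Sset ys rho) = bdec (Sset ys' rho) ->
  bdec (Sset (tl ys) rho) = bdec (Sset (tl ys') rho) ->
  (forall p, Pts (Tail true ys) p <-> Pts (Tail true ys') p) ->
  (forall p, Pts (Tail true (tl ys)) p <-> Pts (Tail true (tl ys')) p) ->
  forall x, PL ys x <-> PL ys' x.
Proof.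
  intros Hd H0 H1 E0 E1 x.
  apply bdec_eq in H0. apply bdec_eq in H1.
  assert (S0 : forall p, Sset ys p <-> Sset ys' p).
  { intro p. rewrite (S_char ys p), (S_char ys' p), E0, H0. tauto. }
  assert (S1 : forall p, Sset (tl ys) p <-> Sset (tl ys') p).
  { intro p. rewrite (S_char (tl ys) p), (S_char (tl ys') p), E1, H1. tauto. }
  rewrite !PL_dec, Hd.
  split; intros [H|[[p [Hp H]]|[p [Hp H]]]]; [left; exact H| right; left; exists p; rewrite <- S0; tauto
    | right; right; exists p; rewrite <- S1; tauto |left; exact H| right; left; exists p; rewrite S0; tauto
    | right; right; exists p; rewrite S1; tauto].
Qed.

Definition vb1 (y : v4) : bool := match y with E | B => false | _ => true end.
Definition vb2 (y : v4) : bool := match y with E | C => false | _ => true end.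

Fixpoint enc_list (ys : list v4) : list bool :=
  match ys with [] => [false] | y :: ys => true :: vb1 y :: vb2 y :: enc_list ys end.

Lemma enc_list_pref ys : forall ys' r r', enc_list ys ++ r = enc_list ys' ++ r' -> ys = ys' /\ r = r'.
Proof.
  induction ys as [|y ys IH]; intros [|y' ys'] r r' H; simpl in H; try discriminate.
  - injection H; auto.
  - injection H as H1 H2 H3. destruct (IH _ _ _ H3) as [-> ->].
    split; [|reflexivity]. f_equal. destruct y, y'; simpl in *; congruence.
Qed.

Fixpoint enc (j : nat) (ys : list v4) : list bool :=
  match j with
  | O => enc_list ys
  | S j => Nat.odd (length ys) :: bdec (Sset ys rho) :: bdec (Sset (tl ys) rho) ::
           enc j (canon (Tail true ys)) ++ enc j (canon (Tail true (tl ys)))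
  end.

Lemma enc_pref j : forall ys ys' r r', enc j ys ++ r = enc j ys' ++ r' ->
  (forall x, PL ys x <-> PL ys' x) /\ r = r'.
Proof.
  induction j as [|j IH]; intros ys ys' r r' H.
  - destruct (enc_list_pref _ _ _ _ H) as [-> ->]. split; [tauto|reflexivity].
  - simpl in H. injection H as H1 H2 H3 H4. rewrite <- !app_assoc in H4.
    destruct (IH _ _ _ _ H4) as [E0 H5]. destruct (IH _ _ _ _ H5) as [E1 ->].
    split; [|reflexivity].
    apply determine; try assumption.
    + intro p. rewrite (canon_Pts (Tail true ys) p), (canon_Pts (Tail true ys') p). apply E0.
    + intro p. rewrite (canon_Pts (Tail true (tl ys)) p), (canon_Pts (Tail true (tl ys')) p). apply E1.
Qed.

Lemma enc_inj j ys ys' : enc j ys = enc j ys' -> forall x, PL ys x <-> PL ys' x.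
Proof. intro H. apply (enc_pref j ys ys' [] []). rewrite H. reflexivity. Qed.

Fixpoint blists (L : nat) : list (list bool) :=
  match L with
  | O => [[]]
  | S L => [] :: map (cons true) (blists L) ++ map (cons false) (blists L)
  end.

Lemma blists_len L : length (blists L) = 2 ^ (S L) - 1.
Proof.
  induction L; [reflexivity|]. simpl blists. simpl length. rewrite length_app, !length_map, IHL.
  simpl. assert (1 <= 2 ^ L) by (apply Nat.pow_le_mono_r with (a:=2) (b:=0) (c:=L); lia). simpl in *. lia.
Qed.

Lemma blists_in L l : length l <= L -> In l (blists L).
Proof.
  revert l; induction L; intros l H.
  - destruct l; [left; reflexivity|simpl in H; lia].
  - destruct l as [|b l]; [left; reflexivity|]. right. simpl in H. apply in_or_app.
    destruct b; [left|right]; apply in_map; apply IHL; lia.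
Qed.

Lemma orbit_eqb_true w w' : orbit_eq w w' -> orbit_eqb w w' = true.
Proof. unfold orbit_eqb. destruct (excluded_middle_informative (orbit_eq w w')); tauto. Qed.

Lemma dedup_incl l : incl (dedup_orbits l) l.
Proof.
  induction l as [|w l IH]; simpl; [apply incl_refl|].
  destruct (existsb (orbit_eqb w) l).
  - apply incl_tl, IH.
  - apply incl_cons; [left; reflexivity|]. apply incl_tl, IH.
Qed.

Lemma count (f : list letter -> list bool) (L : nat) (W : list (list letter)) :
  (forall w, In w W -> length (f w) <= L) ->
  (forall w w', f w = f w' -> orbit_eq w w') ->
  length (dedup_orbits W) <= 2 ^ (S L).
Proof.
  intros HL Hf.
  assert (ND : NoDup (map f (dedup_orbits W))).
  { clear HL. induction W as [|w l IH]; simpl; [constructor|].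
    destruct (existsb (orbit_eqb w) l) eqn:Ex; [exact IH|].
    simpl. constructor; [|exact IH].
    intro Hin. apply in_map_iff in Hin. destruct Hin as [w' [Hw' Hin]].
    apply dedup_incl in Hin.
    assert (existsb (orbit_eqb w) l = true).
    { apply existsb_exists. exists w'. split; [exact Hin|]. apply orbit_eqb_true. apply Hf. symmetry; exact Hw'. }
    congruence. }
  assert (Hi : incl (map f (dedup_orbits W)) (blists L)).
  { intros b Hb. apply in_map_iff in Hb. destruct Hb as [w [<- Hw]]. apply blists_in, HL, dedup_incl, Hw. }
  pose proof (NoDup_incl_length ND Hi) as H. rewrite length_map, blists_len in H. lia.
Qed.

Lemma orbit_eq_Pts w w' : (forall x, Pts w x <-> Pts w' x) -> orbit_eq w w'.
Proof.
  intros H x. unfold orbit_mem.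
  assert (K : forall v, orbit_mem v x <-> Pts v x).
  { intro v. unfold orbit_mem, Pts. split; intros [i [Hi Hx]]; exists i; split; auto.
    - apply functional_extensionality; exact Hx.
    - rewrite Hx; reflexivity. }
  fold (orbit_mem w x) (orbit_mem w' x). rewrite !K. apply H.
Qed.

Definition code (j : nat) (w : list letter) : list bool := enc j (canon w).

Lemma code_inj j w w' : code j w = code j w' -> orbit_eq w w'.
Proof.
  intro H. apply orbit_eq_Pts. intro x. rewrite (canon_Pts w x), (canon_Pts w' x). apply (enc_inj j). exact H.
Qed.

Lemma words_len n w : In w (words_upto n) -> length w <= n.
Proof.
  unfold words_upto. intro H. apply in_flat_map in H. destruct H as [k [Hk Hw]].
  apply in_seq in Hk.
  assert (forall k w, In w (words_exact k) -> length w = k).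
  { clear. induction k; simpl; intros w H.
    - destruct H as [<-|[]]; reflexivity.
    - apply in_flat_map in H. destruct H as [v [Hv H]].
      simpl in H. destruct H as [<-|[<-|[<-|[<-|[]]]]]; simpl; f_equal; apply IHk; exact Hv. }
  rewrite (H _ _ Hw). lia.
Qed.

Open Scope R_scope.

Definition wa (e : R) := 1 - e^3.
Definition vw (e : R) (y : v4) : R :=
  match y with E => 0 | B => e^3 | C => 1 - e^2 | D => 1 - e end.
Definition lw (e : R) (l : letter) : R :=
  match l with La => wa e | Lb => e^3 | Lc => 1 - e^2 | Ld => 1 - e end.
Definition Nw e (w : list letter) : R := fold_right (fun l s => lw e l + s) 0 w.
Definition NL e (ys : list v4) : R := fold_right (fun y s => wa e + vw e y + s) 0 ys.

Lemma cub_diff e t : e ^ 3 + e ^ 2 + e - 2 = (e - t) * ((e + (t+1)/2)^2 + (t^2+t+1 - (t+1)^2/4)) + (t^3+t^2+t-2).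
Proof. field. Qed.

Lemma eta_bounds e : e ^ 3 + e ^ 2 + e - 2 = 0 -> 4/5 < e < 41/50.
Proof.
  intro H. split.
  - destruct (Rlt_or_le (4/5) e) as [h|h]; [exact h|exfalso].
    rewrite (cub_diff e (4/5)) in H.
    assert (0 <= (4/5 - e) * ((e + (4/5+1)/2)^2 + ((4/5)^2+4/5+1 - (4/5+1)^2/4))) by (apply Rmult_le_pos; nra). nra.
  - destruct (Rlt_or_le e (41/50)) as [h|h]; [exact h|exfalso].
    rewrite (cub_diff e (41/50)) in H.
    assert (0 <= (e - 41/50) * ((e + (41/50+1)/2)^2 + ((41/50)^2+41/50+1 - (41/50+1)^2/4))) by (apply Rmult_le_pos; nra). nra.
Qed.


Lemma eb (e : R) (He : e ^ 3 + e ^ 2 + e - 2 = 0) : 4/5 < e < 41/50.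
Proof. exact (eta_bounds e He). Qed.

Lemma wa_pos (e : R) (He : e ^ 3 + e ^ 2 + e - 2 = 0) : 1/4 <= wa e.
Proof. unfold wa. pose proof (eb e He). nra. Qed.

Lemma vw_bounds (e : R) (He : e ^ 3 + e ^ 2 + e - 2 = 0) y : 0 <= vw e y <= 1.
Proof. pose proof (eb e He). destruct y; simpl; nra. Qed.

Lemma lw_bounds (e : R) (He : e ^ 3 + e ^ 2 + e - 2 = 0) l : 0 <= lw e l <= 1.
Proof. pose proof (eb e He). pose proof (wa_pos e He). unfold wa in *. destruct l; simpl; unfold wa; nra. Qed.

Lemma vw_sub (e : R) (He : e ^ 3 + e ^ 2 + e - 2 = 0) y p : vw e (vmul y p) <= vw e y + vw e p.
Proof.
  pose proof (eb e He). pose proof (vw_bounds e He y). pose proof (vw_bounds e He p).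
  destruct y, p; simpl in *; nra.
Qed.

Lemma Nw_app (e : R) (He : e ^ 3 + e ^ 2 + e - 2 = 0) w1 w2 : Nw e (w1 ++ w2) = Nw e w1 + Nw e w2.
Proof. induction w1; simpl; [ring|]. unfold Nw in *. simpl. rewrite IHw1. ring. Qed.

Lemma Nw_len (e : R) (He : e ^ 3 + e ^ 2 + e - 2 = 0) w : Nw e w <= INR (length w).
Proof.
  induction w as [|l w IH]; [unfold Nw; simpl; lra|]. change (length (l :: w)) with (S (length w)). rewrite S_INR. pose proof (lw_bounds e He l).
  unfold Nw in *. simpl. lra.
Qed.

Lemma cst_norm (e : R) (He : e ^ 3 + e ^ 2 + e - 2 = 0) w : vw e (fst (cst w)) + NL e (snd (cst w)) <= Nw e w.
Proof.
  induction w as [|l w IH]; [simpl; lra|].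
  destruct l; simpl; unfold NL, Nw in *; simpl; fold (NL e (snd (cst w))) in *.
  - lra.
  - pose proof (vw_sub e He B (fst (cst w))). simpl in *. lra.
  - pose proof (vw_sub e He C (fst (cst w))). simpl in *. lra.
  - pose proof (vw_sub e He D (fst (cst w))). simpl in *. lra.
Qed.

Lemma canon_norm (e : R) (He : e ^ 3 + e ^ 2 + e - 2 = 0) w : NL e (canon w) <= Nw e w.
Proof. pose proof (cst_norm e He w). pose proof (vw_bounds e He (fst (cst w))). unfold canon. lra. Qed.

Lemma sec_contr (e : R) (He : e ^ 3 + e ^ 2 + e - 2 = 0) y : Nw e (sec false y) + Nw e (sec true y) <= e * (wa e + vw e y).
Proof.
  pose proof (eb e He). assert (H4 : e * (e ^ 3 + e ^ 2 + e - 2) = 0) by (rewrite He; ring).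
  destruct y; simpl; unfold Nw; simpl; unfold wa in *; [nra|lra|lra|lra].
Qed.

Lemma tail_sum (e : R) (He : e ^ 3 + e ^ 2 + e - 2 = 0) ys : Nw e (Tail true ys) + Nw e (Tail false ys) <= e * NL e ys.
Proof.
  induction ys as [|y ys IH]; [unfold Nw, NL; simpl; lra|].
  change (Tail true (y::ys)) with (sec false y ++ Tail false ys).
  change (Tail false (y::ys)) with (sec true y ++ Tail true ys).
  rewrite !(Nw_app e He). pose proof (sec_contr e He y).
  change (NL e (y :: ys)) with (wa e + vw e y + NL e ys). lra.
Qed.

Lemma Nw_nonneg (e : R) (He : e ^ 3 + e ^ 2 + e - 2 = 0) w : 0 <= Nw e w.
Proof. induction w as [|l w IH]; unfold Nw in *; simpl; [lra|]. pose proof (lw_bounds e He l). lra. Qed.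

Lemma tail_tl (e : R) (He : e ^ 3 + e ^ 2 + e - 2 = 0) ys : Nw e (Tail true (tl ys)) <= Nw e (Tail false ys).
Proof.
  destruct ys as [|y ys]; [simpl; lra|]. change (Tail false (y :: ys)) with (sec true y ++ Tail true ys).
  change (tl (y :: ys)) with ys. rewrite (Nw_app e He). pose proof (Nw_nonneg e He (sec true y)). lra.
Qed.

Lemma contraction (e : R) (He : e ^ 3 + e ^ 2 + e - 2 = 0) ys : NL e (canon (Tail true ys)) + NL e (canon (Tail true (tl ys))) <= e * NL e ys.
Proof.
  pose proof (canon_norm e He (Tail true ys)). pose proof (canon_norm e He (Tail true (tl ys))).
  pose proof (tail_sum e He ys). pose proof (tail_tl e He ys). lra.
Qed.

Lemma NL_len (e : R) (He : e ^ 3 + e ^ 2 + e - 2 = 0) ys : INR (length ys) * wa e <= NL e ys.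
Proof.
  induction ys as [|y ys IH]; [unfold NL; simpl; lra|]. change (length (y :: ys)) with (S (length ys)). rewrite S_INR. pose proof (vw_bounds e He y).
  unfold NL in *. simpl. lra.
Qed.

Lemma NL_nonneg (e : R) (He : e ^ 3 + e ^ 2 + e - 2 = 0) ys : 0 <= NL e ys.
Proof. pose proof (NL_len e He ys). pose proof (pos_INR (length ys)). pose proof (wa_pos e He). nra. Qed.

Lemma enc_len (e : R) (He : e ^ 3 + e ^ 2 + e - 2 = 0) j : forall ys, INR (length (enc j ys)) <= 5 * 2 ^ j - 3 + (3 / wa e) * e ^ j * NL e ys.
Proof.
  pose proof (wa_pos e He). pose proof (eb e He).
  induction j as [|j IH]; intro ys.
  - simpl enc. assert (INR (length (enc_list ys)) = 3 * INR (length ys) + 1).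
    { induction ys; simpl enc_list; simpl length; rewrite ?S_INR; [simpl; lra|]. rewrite IHys. lra. }
    rewrite H1. pose proof (NL_len e He ys). simpl.
    assert (3 * INR (length ys) <= 3 / wa e * NL e ys).
    { apply Rmult_le_reg_r with (wa e); [lra|]. field_simplify; [|lra]. nra. }
    lra.
  - cbn [enc length]. rewrite length_app, !S_INR, plus_INR.
    pose proof (IH (canon (Tail true ys))). pose proof (IH (canon (Tail true (tl ys)))).
    pose proof (contraction e He ys).
    assert (0 <= 3 / wa e * e ^ j) by (apply Rmult_le_pos; [apply Rlt_le, Rdiv_lt_0_compat; lra|apply pow_le; lra]).
    assert (3 / wa e * e ^ j * (NL e (canon (Tail true ys)) + NL e (canon (Tail true (tl ys)))) <= 3 / wa e * e ^ j * (e * NL e ys)) by (apply Rmult_le_compat_l; assumption).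
    simpl pow. nra.
Qed.

Lemma nat_up r : r < INR (Z.to_nat (up r)) /\ (0 <= r -> INR (Z.to_nat (up r)) <= r + 1).
Proof.
  destruct (archimed r) as [H1 H2].
  destruct (Z_le_gt_dec 0 (up r)) as [h|h].
  - rewrite INR_IZR_INZ, Z2Nat.id by exact h. split; [lra|intro; lra].
  - replace (Z.to_nat (up r)) with 0%nat by (destruct (up r); simpl; lia). simpl. apply Z.gt_lt in h. apply IZR_lt in h. split; [lra|intro; lra].
Qed.

Lemma bernoulli q m : 1 < q -> 1 + INR m * (q - 1) <= q ^ m.
Proof.
  intro Hq. induction m; [simpl; lra|]. rewrite S_INR. simpl pow.
  assert (1 <= q ^ m) by (apply pow_R1_Rle; lra). nra.
Qed.

Lemma exists_j q x : 1 < q -> 1 <= x -> exists j, q ^ j <= x < q ^ S j.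
Proof.
  intros Hq Hx.
  assert (Hm : exists m, x < q ^ m).
  { destruct (nat_up ((x - 1) / (q - 1))) as [H _]. exists (Z.to_nat (up ((x - 1) / (q - 1)))).
    pose proof (bernoulli q (Z.to_nat (up ((x - 1) / (q - 1)))) Hq).
    apply Rmult_lt_compat_r with (r := q - 1) in H; [|lra].
    unfold Rdiv in H. rewrite Rmult_assoc, Rinv_l in H by lra. lra. }
  destruct Hm as [m Hm]. induction m.
  - simpl in Hm. lra.
  - destruct (Rlt_or_le x (q ^ m)) as [h|h]; [apply IHm; exact h|]. exists m. split; assumption.
Qed.

Lemma exp_mono x y : x <= y -> exp x <= exp y.
Proof. intro H. destruct (Rle_lt_or_eq_dec x y H) as [h|h]; [apply Rlt_le, exp_increasing, h|subst; lra]. Qed.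

Theorem lemma4p9 (eta : R) (Heta : eta ^ 3 + eta ^ 2 + eta - 2 = 0) :
  exists C : R, 0 < C /\
    exists N : nat, forall n : nat, (N <= n)%nat ->
      INR (Sigma n) <= exp (Rpower (C * INR n) (ln 2 / ln (2 / eta))).
Proof.
  pose proof (eta_bounds eta Heta) as Hb.
  pose proof (wa_pos eta Heta) as Hwa.
  set (q := 2 / eta).
  assert (Hq : 1 < q) by (unfold q; apply Rmult_lt_reg_r with eta; [lra|]; field_simplify; lra).
  assert (Hlq : 0 < ln q) by (rewrite <- ln_1; apply ln_increasing; lra).
  assert (Hl2 : 0 < ln 2) by (rewrite <- ln_1; apply ln_increasing; lra).
  set (al := ln 2 / ln q).
  assert (Hal : 0 < al) by (apply Rdiv_lt_0_compat; lra).
  assert (Hqa : Rpower q al = 2).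
  { unfold Rpower, al. replace (ln 2 / ln q * ln q) with (ln 2) by (field; lra). apply exp_ln; lra. }
  set (K := (7 + 12 * q) * ln 2).
  assert (HK : 0 < K) by (unfold K; apply Rmult_lt_0_compat; lra).
  exists (Rpower K (/ al)). split; [unfold Rpower; apply exp_pos|].
  exists 1%nat. intros n Hn.
  assert (Hx : 1 <= INR n) by (apply (le_INR 1); exact Hn).
  destruct (exists_j q (INR n) Hq Hx) as [j [Hj1 Hj2]].
  set (Lr := 5 * 2 ^ j + (3 / wa eta) * eta ^ j * INR n).
  assert (HLr0 : 0 <= Lr).
  { unfold Lr. assert (0 <= 3 / wa eta * eta ^ j * INR n); [|pose proof (pow_le 2 j); lra].
    apply Rmult_le_pos; [apply Rmult_le_pos; [apply Rlt_le, Rdiv_lt_0_compat; lra|apply pow_le; lra]|lra]. }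
  set (L := Z.to_nat (up Lr)).
  destruct (nat_up Lr) as [HL1 HL2]. specialize (HL2 HLr0). fold L in HL1, HL2.
  assert (Hcnt : (Sigma n <= 2 ^ S L)%nat).
  { unfold Sigma. apply (count (code j)).
    - intros w Hw. apply INR_le. unfold code.
      pose proof (enc_len eta Heta j (canon w)).
      pose proof (canon_norm eta Heta w). pose proof (Nw_len eta Heta w).
      pose proof (le_INR _ _ (words_len n w Hw)).
      assert (3 / wa eta * eta ^ j * NL eta (canon w) <= 3 / wa eta * eta ^ j * INR n).
      { apply Rmult_le_compat_l; [apply Rmult_le_pos; [apply Rlt_le, Rdiv_lt_0_compat; lra|apply pow_le; lra]|lra]. }
      unfold Lr in HL1. lra.
    - apply code_inj. }
  apply le_INR in Hcnt. rewrite pow_INR in Hcnt. replace (INR 2) with 2 in Hcnt by (simpl; lra).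
  eapply Rle_trans; [exact Hcnt|].
  rewrite <- Rpower_pow by lra.
  unfold Rpower at 1. apply exp_mono.
  rewrite <- Rpower_mult_distr by (unfold Rpower; apply exp_pos || lra).
  rewrite Rpower_mult, Rinv_l, Rpower_1 by lra.
  set (P := Rpower (INR n) al).
  assert (HP1 : 1 <= P).
  { unfold P. replace 1 with (Rpower 1 al) at 1 by (unfold Rpower; rewrite ln_1, Rmult_0_r, exp_0; reflexivity).
    apply Rle_Rpower_l; lra. }
  assert (H2j : 2 ^ j <= P).
  { unfold P. replace (2 ^ j) with (Rpower (q ^ j) al).
    - apply Rle_Rpower_l; [lra|]. split; [apply pow_lt; lra|exact Hj1].
    - rewrite <- Rpower_pow by lra. rewrite Rpower_mult, Rmult_comm, <- Rpower_mult, Hqa, Rpower_pow by lra. reflexivity. }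
  assert (Hen : eta ^ j * INR n <= 2 ^ j * q).
  { apply Rlt_le. apply Rlt_le_trans with (eta ^ j * q ^ S j).
    - apply Rmult_lt_compat_l; [apply pow_lt; lra|exact Hj2].
    - simpl pow. replace (eta ^ j * (q * q ^ j)) with ((eta * q) ^ j * q) by (rewrite Rpow_mult_distr; ring).
      replace (eta * q) with 2 by (unfold q; field; lra). lra. }
  assert (H3 : 3 / wa eta <= 12).
  { apply Rmult_le_reg_r with (wa eta); [lra|]. unfold Rdiv. rewrite Rmult_assoc, Rinv_l by lra. lra. }
  assert (HLr : Lr <= (5 + 12 * q) * P).
  { unfold Lr. rewrite Rmult_assoc.
    assert (3 / wa eta * (eta ^ j * INR n) <= 12 * (2 ^ j * q)).
    { apply Rmult_le_compat; [apply Rlt_le, Rdiv_lt_0_compat; lra| apply Rmult_le_pos; [apply pow_le; lra|lra]|exact H3|exact Hen]. }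
    assert (0 <= 2 ^ j) by (apply pow_le; lra). nra. }
  rewrite S_INR. unfold K.
  assert (INR L + 1 <= (7 + 12 * q) * P) by lra.
  rewrite (Rmult_comm ((7 + 12 * q)) (ln 2)), Rmult_assoc, (Rmult_comm (INR L + 1)).
  apply Rmult_le_compat_l; lra.
Qed.
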